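(* Let $n\ge2$. Under the diagonal top-down model on fully heterochronous ranked tree shapes with $n$ leaves, conditionally on the diagonal $(F_{k,k})_{k=0}^{2n-3}$ of the generated $\mathbf{F}$-matrix $F$, the matrix $F$ is uniformly distributed over all $\mathbf{F}$-matrices of fully heterochronous ranked tree shapes with $n$ leaves having that diagonal.
   Context: A fully heterochronous ranked tree shape with $n$ leaves is a rooted full binary tree (every node has out-degree $0$ or $2$), without leaf labels, with $n$ leaves, together with a total ordering of all $2n-1$ nodes (leaves included) such that nodes appear in increasing order along every path from the root to a leaf; the position of a node in this order, numbered $0,\dots,2n-2$, is its rank. Its $\mathbf{F}$-matrix is the $(2n-2)\times(2n-2)$ lower triangular matrix $F$, indices from $0$ to $2n-3$, where for $0\le j\le i$ the entry $F_{i,j}$ is the number of edges from a parent node $v$ to a child node $w$ with rank of $v$ at most $j$ and rank of $w$ larger than $i$ (entries with a negative index are taken to be $0$). The diagonal of such a matrix is a sequence of positive integers with $F_{0,0}=2$, $F_{k,k}=F_{k-1,k-1}\pm1$ and $F_{2n-3,2n-3}=1$; there are $C_{n-1}=\frac1n\binom{2n-2}{n-1}$ such sequences. Diagonal top-down model: first choose the diagonal $(F_{k,k})_{k=0}^{2n-3}$ uniformly at random among all such valid diagonals. Then build the remaining entries row by row: for $k=1,\dots,2n-3$, given rows $0,\dots,k-1$, choose $L\in\{0,\dots,k-1\}$ with probability $(F_{k-1,L}-F_{k-1,L-1})/F_{k-1,k-1}$ and set $F_{k,j}=F_{k-1,j}$ for $j<L$ and $F_{k,j}=F_{k-1,j}-1$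 for $L\le j\le k-1$ (with $F_{k,k}$ the already chosen diagonal entry). Equivalently, the node of rank $k$ is attached as the child end of an edge chosen uniformly at random among the $F_{k-1,k-1}$ edges whose parent has rank at most $k-1$ and whose child has not yet been placed; $L$ is the rank of that parent; the node of rank $k$ is internal if $F_{k,k}=F_{k-1,k-1}+1$ and a leaf otherwise (the last node, of rank $2n-2$, is a leaf attached to the unique remaining edge). *)

(* Defs.v *)
From mathcomp Require Import all_boot all_order all_algebra.
Set Implicit Arguments. Unset Strict Implicit. Unset Printing Implicit Defensive.
Import GRing.Theory Num.Theory.

(* Nodes are identified with their ranks 0 .. 2n-2.  Since the tree shape is *)
(* unlabelled and children are unordered, a ranked tree shape is exactly      *)
(* determined by its parent function: node 0 is the root (we set t 0 = 0 as a *)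
(* dummy value), every node w >= 1 has a parent t w of smaller rank (ranks    *)
(* increase along root-to-leaf paths), every node has 0 or 2 children, and    *)
(* there are n leaves.                                                         *)

Definition children (N : nat) (t : {ffun 'I_N -> 'I_N}) (v : 'I_N) : {set 'I_N} :=
  [set w : 'I_N | (0 < val w) && (t w == v)].

Definition is_rts (n : nat) (t : {ffun 'I_(2 * n - 1) -> 'I_(2 * n - 1)}) : bool :=
  [forall w : 'I_(2 * n - 1),
     if val w == 0 then val (t w) == 0 else val (t w) < val w]
  && [forall v : 'I_(2 * n - 1),
        (#|children t v| == 0) || (#|children t v| == 2)]
  && (#|[set v : 'I_(2 * n - 1) | #|children t v| == 0]| == n).
Arguments is_rts n t : clear implicits.

Definition Fmatrix (n : nat) (t : {ffun 'I_(2 * n - 1) -> 'I_(2 * n - 1)})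
  : 'M[nat]_(2 * n - 2) :=
  \matrix_(i, j) if (j <= i)%N then
     #|[set w : 'I_(2 * n - 1) | (0 < val w) && (val (t w) <= j)%N && (i < val w)%N]|
   else 0%N.

Definition ent (m : nat) (M : 'M[nat]_m) (i j : nat) : nat :=
  match (insub i : option 'I_m), (insub j : option 'I_m) with
  | Some i', Some j' => M i' j'
  | _, _ => 0%N
  end.

Definition mdiag (m : nat) (M : 'M[nat]_m) : seq nat :=
  [seq ent M k k | k <- iota 0 m].

Definition valid_diag (n : nat) (d : seq nat) : bool :=
  (size d == 2 * n - 2)
  && (nth 0 d 0 == 2)
  && (nth 0 d (2 * n - 3) == 1)
  && all (fun k => 0 < nth 0 d k) (iota 0 (2 * n - 2))
  && all (fun k => (nth 0 d k == (nth 0 d k.-1).+1) || ((nth 0 d k).+1 == nth 0 d k.-1))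
         (iota 1 (2 * n - 3)).

Definition Fmats_with_diag (n : nat) (d : seq nat) : seq 'M[nat]_(2 * n - 2) :=
  undup [seq Fmatrix t | t <- enum [pred t : {ffun 'I_(2 * n - 1) -> 'I_(2 * n - 1)} | is_rts n t && (mdiag (Fmatrix t) == d)]].

Local Open Scope ring_scope.

(* Diagonal top-down model, second stage: probability of passing from row   *)
(* k-1 of M to row k of M (the diagonal entry F_{k,k} being given).          *)
(* L is chosen with probability (F_{k-1,L} - F_{k-1,L-1}) / F_{k-1,k-1}     *)
(* (F_{k-1,-1} = 0) and then F_{k,j} = F_{k-1,j} - [L <= j] for j < k.       *)
Definition dtd_step (m : nat) (M : 'M[nat]_m) (k : nat) : rat :=
  \sum_(L < k)
    (((ent M k.-1 L)%:Z - (if val L is L'.+1 then ent M k.-1 L' else 0%N)%:Z)%:~R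
       / (ent M k.-1 k.-1)%:R)
    * (([forall j : 'I_k, ent M k j == (ent M k.-1 j - (val L <= val j))%N]) : bool)%:R.

(* Conditional probability, given that the diagonal chosen in the first      *)
(* stage is d, that the diagonal top-down model outputs the matrix M.        *)
Definition dtd_cond (n : nat) (d : seq nat) (M : 'M[nat]_(2 * n - 2)) : rat :=
  ((mdiag M == d) : bool)%:R
  * ([forall i : 'I_(2 * n - 2), forall j : 'I_(2 * n - 2),
        (val i < val j)%N ==> (M i j == 0%N)] : bool)%:R
  * \prod_(1 <= k < 2 * n - 2) dtd_step M k.
Arguments dtd_cond n d M : clear implicits.
Arguments Fmats_with_diag n d : clear implicits.
Arguments valid_diag n d : clear implicits.

(* Main.v *)
Require Import Defs.
From mathcomp Require Import all_boot all_order all_algebra.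
From mathcomp Require Import zify ring lra.
Set Implicit Arguments. Unset Strict Implicit. Unset Printing Implicit Defensive.
Import GRing.Theory Num.Theory.

Definition row0 (d : seq nat) : nat -> nat := fun j => if j == 0 then nth 0 d 0 else 0.
Fixpoint rowf (d ls : seq nat) (k : nat) : nat -> nat :=
  match k with
  | 0 => row0 d
  | k'.+1 => fun j => if j < k'.+1 then rowf d ls k' j - (nth 0 ls k' <= j)
                      else if j == k'.+1 then nth 0 d k'.+1 else 0
  end.
Definition build n d ls : 'M[nat]_(2*n-2) := \matrix_(i,j) rowf d ls i j.
Definition wt (r : nat -> nat) (L k : nat) : rat :=
  (((r L)%:Z - (if L is L'.+1 then r L' else 0%N)%:Z)%:~R / (r k.-1)%:R)%R.
Definition matchb (r s : nat -> nat) (k L : nat) : bool :=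
  [forall j : 'I_k, s j == (r j - (L <= val j))%N].
Lemma dtd_stepE m (M : 'M[nat]_m) k : dtd_step M k =
  (\sum_(L < k) wt (ent M k.-1) L k * (matchb (ent M k.-1) (ent M k) k L)%:R)%R.
Proof. by []. Qed.

Lemma entE m (M : 'M[nat]_m) i j (hi : i < m) (hj : j < m) :
  ent M i j = M (Ordinal hi) (Ordinal hj).
Proof.
rewrite /ent; case: insubP => [i' _ ei|]; last by rewrite hi.
case: insubP => [j' _ ej|]; last by rewrite hj.
by congr (M _ _); apply: val_inj.
Qed.

Lemma ent_outj m (M : 'M[nat]_m) i j : m <= j -> ent M i j = 0.
Proof.
move=> h; rewrite /ent; case: (insub i) => // a.
by rewrite insubF // ltnNge h.
Qed.

Lemma rowf_up d ls i j : i < j -> rowf d ls i j = 0.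
Proof.
elim: i j => [|i IH] j h /=; first by rewrite /row0; case: j h.
rewrite ifF; last by apply/negbTE; rewrite -leqNgt ltnW.
by rewrite ifF //; apply/negbTE; rewrite neq_ltn h orbT.
Qed.

Lemma rowf_diag d ls k : rowf d ls k k = nth 0 d k.
Proof. by case: k => [|k] /=; rewrite ?ltnn ?eqxx. Qed.

Lemma rowf_rcons d ls L k : k <= size ls -> rowf d (rcons ls L) k = rowf d ls k.
Proof.
elim: k => [|k IH] h //=.
by rewrite IH ?(ltnW h) // nth_rcons h.
Qed.

Lemma ent_build n (d ls : seq nat) i j : i < 2*n-2 -> ent (build n d ls) i j = rowf d ls i j.
Proof.
move=> hi; case: (ltnP j (2*n-2)) => hj.
  by rewrite entE mxE.
by rewrite ent_outj // rowf_up //; apply: leq_trans hj.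
Qed.

Fixpoint choices (K : nat) : seq (seq nat) :=
  if K is K'.+1 then [seq rcons ls L | ls <- choices K', L <- iota 0 K] else [:: [::]].

Lemma choices_prop K (ls : seq nat) : ls \in choices K ->
  size ls = K /\ forall i, i < K -> nth 0 ls i <= i.
Proof.
elim: K ls => [|K IH] ls; first by rewrite inE => /eqP ->.
case/allpairsP => [[x y] [hx hy ->]]; rewrite /= in hx.
have [hs hn] := IH _ hx.
split; first by rewrite size_rcons hs.
move: hy; rewrite mem_iota /= => hy.
move=> i hi; rewrite nth_rcons hs.
case: ltnP => h1; first exact: hn.
case: eqP => [->|_] //; lia.
Qed.

Definition Wk d ls K : rat := (\prod_(1 <= k < K.+1) wt (rowf d ls k.-1) (nth 0 ls k.-1) k)%R.

Lemma Wk_rcons d ls L K : size ls = K ->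
  Wk d (rcons ls L) K.+1 = (Wk d ls K * wt (rowf d ls K) L K.+1)%R.
Proof.
move=> hs; rewrite /Wk big_nat_recr //=; congr (_ * _)%R.
  apply: eq_big_nat => k /andP[h1 h2].
  rewrite rowf_rcons ?nth_rcons; last by lia.
  by rewrite ifT //; lia.
by rewrite rowf_rcons ?hs // nth_rcons hs ltnn eqxx.
Qed.

Lemma tele (r : nat -> nat) K :
  (\sum_(L < K.+1) (((r L)%:Z - (if val L is L'.+1 then r L' else 0%N)%:Z)%:~R : rat))%R
  = ((r K)%:R)%R.
Proof.
elim: K => [|K IH]; first by rewrite big_ord1 /= subr0.
rewrite big_ord_recr /= IH intrB /=.
by rewrite addrC subrK.
Qed.

Lemma sum_wt (r : nat -> nat) K : r K != 0 ->
  (\sum_(L < K.+1) wt r L K.+1 = 1)%R.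
Proof.
move=> h; rewrite /wt -mulr_suml.
rewrite (eq_bigr (fun L : 'I_K.+1 => (((r L)%:Z - (if val L is L'.+1 then r L' else 0%N)%:Z)%:~R : rat))); last first.
  by move=> [[|L] hL].
by rewrite tele /= divff // pnatr_eq0.
Qed.

Lemma iota_ord (R : Type) (idx : R) (op : R -> R -> R) K (F : nat -> R) :
  \big[op/idx]_(L <- iota 0 K) F L = \big[op/idx]_(L < K) F L.
Proof.
have -> : iota 0 K = index_iota 0 K by rewrite /index_iota subn0.
exact: big_mkord.
Qed.

Lemma sumW d K : (forall k, k < K -> 0 < nth 0 d k) ->
  (\sum_(ls <- choices K) Wk d ls K = 1)%R.
Proof.
elim: K => [|K IH] hd; first by rewrite /= big_seq1 /Wk big_geq.
rewrite big_allpairs_dep.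
rewrite (eq_big_seq (fun ls => Wk d ls K)); last first.
  move=> ls hls; have [hs _] := choices_prop hls.
  rewrite (eq_bigr (fun L => Wk d ls K * wt (rowf d ls K) L K.+1)%R); last first.
    by move=> L _; rewrite Wk_rcons.
  rewrite -mulr_sumr iota_ord sum_wt ?mulr1 //.
  by rewrite rowf_diag -lt0n hd.
by apply: IH => k hk; apply: hd; lia.
Qed.

Lemma ent_buildF n (d ls : seq nat) i : i < 2*n-2 -> ent (build n d ls) i =1 rowf d ls i.
Proof. by move=> h j; apply: ent_build. Qed.
Arguments ent_buildF : clear implicits.

Definition term m (M : 'M[nat]_m) k L : rat :=
  (wt (ent M k.-1) L k * (matchb (ent M k.-1) (ent M k) k L)%:R)%R.

Lemma prod_expand m (M : 'M[nat]_m) K :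
  (\prod_(1 <= k < K.+1) dtd_step M k =
  \sum_(ls <- choices K) \prod_(1 <= k < K.+1) term M k (nth 0 ls k.-1))%R.
Proof.
elim: K => [|K IH]; first by rewrite /= big_seq1 !big_geq.
rewrite big_nat_recr // IH dtd_stepE [LHS]/= mulr_suml big_allpairs_dep.
apply: eq_big_seq => ls hls; have [hs _] := choices_prop hls.
rewrite mulr_sumr iota_ord; apply: eq_bigr => L _.
rewrite [RHS]big_nat_recr //=; congr (_ * _)%R.
  apply: eq_big_nat => k hk; rewrite nth_rcons hs ifT //; lia.
by rewrite nth_rcons hs ltnn eqxx.
Qed.

Lemma wt_ext r r' L k : r =1 r' -> wt r L k = wt r' L k.
Proof. by move=> h; rewrite /wt !h; case: L => [|L]; rewrite ?h. Qed.

Lemma matchb_ext r r' s s' k L : r =1 r' -> s =1 s' -> matchb r s k L = matchb r' s' k L.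
Proof. by move=> h1 h2; apply: eq_forallb => j; rewrite h1 h2. Qed.

Lemma mdiag_nth m (M : 'M[nat]_m) k : k < m -> nth 0 (mdiag M) k = ent M k k.
Proof. by move=> h; rewrite /mdiag (nth_map 0) ?size_iota // nth_iota. Qed.

Lemma mdiag_build n (d ls : seq nat) : size d = 2*n-2 -> mdiag (build n d ls) = d.
Proof.
move=> hs; apply: (@eq_from_nth _ 0); first by rewrite size_map size_iota hs.
move=> k; rewrite size_map size_iota => hk.
by rewrite mdiag_nth // ent_build // rowf_diag.
Qed.

Lemma upper_build n (d ls : seq nat) :
  [forall i : 'I_(2*n-2), forall j : 'I_(2*n-2), (val i < val j) ==> (build n d ls i j == 0)].
Proof.
apply/forallP => i; apply/forallP => j; apply/implyP => h.
by rewrite mxE rowf_up.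
Qed.

Lemma build_unique n (d ls : seq nat) (M : 'M[nat]_(2*n-2)) :
  mdiag M = d ->
  [forall i : 'I_(2*n-2), forall j : 'I_(2*n-2), (val i < val j) ==> (M i j == 0)] ->
  (forall k, 1 <= k < 2*n-2 -> matchb (ent M k.-1) (ent M k) k (nth 0 ls k.-1)) ->
  M = build n d ls.
Proof.
move=> hd hu hm.
have hdiag k : k < 2*n-2 -> ent M k k = nth 0 d k by move=> hk; rewrite -hd mdiag_nth.
have hup i j : i < j -> ent M i j = 0.
  move=> hij; case: (ltnP j (2*n-2)) => hj; last by rewrite ent_outj.
  have hi : i < 2*n-2 by lia.
  rewrite (entE M hi hj).
  by move/forallP: hu => /(_ (Ordinal hi)) /forallP /(_ (Ordinal hj)) /implyP /(_ hij) /eqP.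
have claim : forall i, i < 2*n-2 -> forall j, ent M i j = rowf d ls i j.
  elim=> [|i IH] hi j.
    case: j => [|j]; first by rewrite hdiag.
    by rewrite hup.
  case: (ltngtP j i.+1) => hj.
  - have := hm i.+1; rewrite hi /= => /(_ isT) /forallP /(_ (Ordinal hj)) /eqP /= ->.
    by rewrite IH ?hj //; lia.
  - by rewrite hup // rowf_up.
  - by rewrite hj hdiag // rowf_diag.
apply/matrixP => -[i hi] [j hj].
by rewrite mxE -(entE M hi hj) claim.
Qed.

Lemma pointwise n (d ls : seq nat) (M : 'M[nat]_(2*n-2)) : 1 < n -> size d = 2*n-2 ->
  (((mdiag M == d) : bool)%:R
   * ([forall i : 'I_(2*n-2), forall j : 'I_(2*n-2), (val i < val j)%N ==> (M i j == 0%N)] : bool)%:R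
   * \prod_(1 <= k < 2*n-2) term M k (nth 0 ls k.-1)
   = ((M == build n d ls) : bool)%:R * Wk d ls (2*n-3))%R.
Proof.
move=> hn hs.
have hm : (2*n-3).+1 = 2*n-2 by lia.
rewrite /Wk hm.
case: (eqVneq M (build n d ls)) => [->|hne].
  rewrite mdiag_build // !eqxx upper_build !mul1r.
  apply: eq_big_nat => k /andP[h1 h2].
  have hk1 : k.-1 < 2*n-2 by lia.
  rewrite /term (wt_ext _ _ (ent_buildF n d ls _ hk1)).
  rewrite (matchb_ext _ _ (ent_buildF n d ls _ hk1) (ent_buildF n d ls _ h2)).
  case: k h1 h2 hk1 => [|k] // _ _ _ /=.
  have -> : matchb (rowf d ls k) (rowf d ls k.+1) k.+1 (nth 0 ls k) = true.
    by apply/forallP => j /=; rewrite ltn_ord.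
  by rewrite mulr1.
rewrite mul0r.
case hd: (mdiag M == d); last by rewrite !mul0r.
case hu: [forall _, _]; last by rewrite mulr0 mul0r.
rewrite !mul1r; apply/eqP/negPn/negP => hnz.
move/eqP: hne; apply; apply: build_unique => //; first exact/eqP.
move=> k hk.
move: hnz; rewrite prodf_seq_neq0 => /allP /(_ k).
rewrite mem_index_iota hk => /(_ isT) /=.
rewrite /term; case: matchb => //.
by rewrite mulr0 eqxx.
Qed.

Lemma dtd_cond_expand n (d : seq nat) (M : 'M[nat]_(2*n-2)) : 1 < n -> size d = 2*n-2 ->
  dtd_cond n d M = (\sum_(ls <- choices (2*n-3)) ((M == build n d ls) : bool)%:R * Wk d ls (2*n-3))%R.
Proof.
move=> hn hs.
have hm : (2*n-3).+1 = 2*n-2 by lia.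
rewrite /dtd_cond.
have := prod_expand M (2*n-3); rewrite hm => ->.
rewrite mulr_sumr; apply: eq_bigr => ls _.
exact: pointwise.
Qed.

Lemma valid_facts n d : 1 < n -> valid_diag n d ->
  [/\ size d = 2*n-2, nth 0 d 0 = 2, nth 0 d (2*n-3) = 1,
      (forall k, k < 2*n-2 -> 0 < nth 0 d k) &
      (forall k, 0 < k < 2*n-2 -> nth 0 d k = (nth 0 d k.-1).+1 \/ (nth 0 d k).+1 = nth 0 d k.-1)].
Proof.
move=> hn; rewrite /valid_diag.
move=> /andP[/andP[/andP[/andP[/eqP h1 /eqP h2] /eqP h3] /allP h4] /allP h5]; split => //.
  by move=> k hk; apply: h4; rewrite mem_iota.
move=> k hk; have := h5 k; rewrite mem_iota.
have -> : (1 <= k < 1 + (2 * n - 3)) by lia.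
by move=> /(_ isT) /orP[/eqP|/eqP]; auto.
Qed.

Lemma sumW_valid n d : 1 < n -> valid_diag n d ->
  (\sum_(ls <- choices (2*n-3)) Wk d ls (2*n-3) = 1)%R.
Proof.
move=> hn hd; have [_ _ _ h4 _] := valid_facts hn hd.
apply: sumW => k hk; apply: h4; lia.
Qed.

Lemma wt_nz r L k : wt r L k != 0%R -> r L != (if L is L'.+1 then r L' else 0).
Proof.
move=> h; apply/negP => /eqP he; move: h; rewrite /wt he subrr mul0r eqxx.
by [].
Qed.

Lemma Wk_nz d ls K : Wk d ls K != 0%R ->
  forall k, 0 < k < K.+1 -> wt (rowf d ls k.-1) (nth 0 ls k.-1) k != 0%R.
Proof.
rewrite /Wk prodf_seq_neq0 => /allP h k hk.
by have := h k; rewrite mem_index_iota hk => /(_ isT).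
Qed.

Lemma mono n (d ls : seq nat) : 1 < n -> valid_diag n d -> ls \in choices (2*n-3) ->
  Wk d ls (2*n-3) != 0%R ->
  forall k, k < 2*n-2 -> forall i j, i <= j <= k -> rowf d ls k i <= rowf d ls k j.
Proof.
move=> hn hd hls hW; have [hs h0 h1 hpos hpm] := valid_facts hn hd.
have [hsz hch] := choices_prop hls.
elim=> [|k IH] hk i j hij.
  by have -> : i = j by lia.
set L := nth 0 ls k.
have hL : L <= k by apply: hch; lia.
have hne : rowf d ls k L != (if L is L'.+1 then rowf d ls k L' else 0).
  have hk' : 0 < k.+1 < (2*n-3).+1 by lia.
  exact: (wt_nz (Wk_nz hW hk')).
have IH' := IH (ltnW hk).
have hlt : forall i, i < L -> rowf d ls k i < rowf d ls k L.
  move: hne; case: L hL => [|L'] hL hne i' hi' //.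
  have a1 : i' <= L' <= k by lia.
  have a2 : L' <= L'.+1 <= k by lia.
  have b1 := IH' i' L' a1; have b2 := IH' L' L'.+1 a2.
  move/eqP: hne => hne; lia.
have key : forall i j, i <= j <= k -> rowf d ls k i - (L <= i) <= rowf d ls k j - (L <= j).
  move=> i' j' hij'.
  have a := IH' i' j' hij'.
  case: (leqP L i') => h1'; case: (leqP L j') => h2' /=; try lia.
  have a2 := hlt i' h1'; have a3 := IH' L j'; lia.
rewrite /=.
case: (ltnP j k.+1) => hj.
  have hi : i < k.+1 by lia.
  rewrite hi; apply: key; lia.
have ej : j = k.+1 by lia.
rewrite ej eqxx -/L.
case: (ltnP i k.+1) => hi.
  have a := key i k; rewrite hL rowf_diag in a.
  have := hpm k.+1; rewrite /=.
  have a2 : i <= k <= k by lia.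
  have a3 := a a2.
  have a4 : 0 < k.+1 < 2*n-2 by lia.
  move=> /(_ a4) [] e; lia.
have -> : i = k.+1 by lia.
by rewrite eqxx.
Qed.

Lemma card_nat N (P : nat -> bool) : #|[set w : 'I_N | P (val w)]| = \sum_(0 <= w < N) P w.
Proof.
rewrite -sum1_card big_mkcond /= big_mkord.
by apply: eq_bigr => w _; rewrite inE; case: P.
Qed.

Lemma sum_split N i (P : nat -> bool) : i < N -> (forall w, w <= i -> P w = false) ->
  \sum_(0 <= w < N) P w = \sum_(i.+1 <= w < N) P w.
Proof.
move=> hi hP; rewrite (big_cat_nat _ (n:=i.+1)) //=.
rewrite big_nat_cond big1 ?add0n // => w /andP[/andP[_ hw] _].
by rewrite hP.
Qed.

Definition Cnt N (f : nat -> nat) i j := \sum_(i.+1 <= w < N) (f w <= j).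

Lemma Cnt_step N f i j : 0 < i < N -> Cnt N f i.-1 j = (f i <= j) + Cnt N f i j.
Proof. by case: i => // i /andP[_ h]; rewrite /Cnt /= big_ltn. Qed.

Lemma Cnt_card N (t : {ffun 'I_N -> 'I_N}) f i j : (forall w, val (t w) = f (val w)) -> i < N ->
  #|[set w : 'I_N | (0 < val w) && (val (t w) <= j) && (i < val w)]| = Cnt N f i j.
Proof.
move=> hf hi.
have -> : [set w : 'I_N | (0 < val w) && (val (t w) <= j) && (i < val w)] =
          [set w : 'I_N | (0 < val w) && (f (val w) <= j) && (i < val w)].
  by apply/setP => w; rewrite !inE hf.
rewrite (card_nat _ (fun x => (0 < x) && (f x <= j) && (i < x))) (sum_split (i:=i)) //; last first.
  by move=> w hw; rewrite [i < w]ltnNge hw andbF.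
apply: eq_big_nat => w /andP[hw _].
by rewrite hw andbT (leq_ltn_trans (leq0n i) hw).
Qed.

Lemma Cnt_mono N f i j j' : j <= j' -> Cnt N f i j <= Cnt N f i j'.
Proof.
move=> h; apply: leq_sum => w _.
case: (leqP (f w) j) => h1 //; rewrite (leq_trans h1 h) //.
Qed.

Lemma card_children N (t : {ffun 'I_N -> 'I_N}) f (u : 'I_N) :
  (forall w, val (t w) = f (val w)) -> (forall w, 0 < w < N -> f w < w) ->
  #|children t u| = \sum_((val u).+1 <= w < N) (f w == val u).
Proof.
move=> hf hlt; case: u => u hu /=.
have -> : children t (Ordinal hu) = [set w : 'I_N | (0 < val w) && (f (val w) == u)].
  by apply/setP => w; rewrite !inE -(inj_eq val_inj) /= hf.
rewrite (card_nat _ (fun x => (0 < x) && (f x == u))) (sum_split (i:=u)) //; last first.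
  move=> w hw; case: w hw => // w hw /=.
  have := hlt w.+1; case: (ltnP w.+1 N) => hN; last first.
    lia.
  move=> /(_ isT) h /=; apply/negbTE/eqP; lia.
apply: eq_big_nat => w /andP[hw _].
by rewrite (leq_ltn_trans (leq0n _) hw).
Qed.

Lemma sum_children N (t : {ffun 'I_N -> 'I_N}) :
  \sum_(u : 'I_N) #|children t u| = N.-1.
Proof.
have e u : #|children t u| = \sum_(w : 'I_N) ((0 < val w) && (t w == u)).
  by rewrite -sum1_card big_mkcond /=; apply: eq_bigr => w _; rewrite inE; case: (_ && _).
rewrite (eq_bigr _ (fun u _ => e u)) exchange_big /=.
have e2 (w : 'I_N) : \sum_(u : 'I_N) ((0 < val w) && (t w == u)) = (0 < val w).
  rewrite (bigD1 (t w)) //= eqxx andbT big1 ?addn0 // => u hu.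
  by rewrite eq_sym (negbTE hu) andbF.
rewrite (eq_bigr _ (fun w _ => e2 w)).
rewrite -(big_mkord xpredT (fun w => (0 < w) : nat)).
case: N t e e2 => [|N] t e e2; first by rewrite big_geq.
rewrite big_ltn //= add0n.
rewrite (eq_big_nat _ _ (F2 := fun _ => 1)); last by move=> w /andP[hw _]; rewrite hw.
by rewrite sum_nat_const_nat muln1 subn1.
Qed.

Lemma leaves_n n (t : {ffun 'I_(2*n-1) -> 'I_(2*n-1)}) : 1 < n ->
  (forall u, #|children t u| = 0 \/ #|children t u| = 2) ->
  #|[set u | #|children t u| == 0]| = n.
Proof.
move=> hn hch.
have hs := sum_children t.
rewrite (bigID (fun u => #|children t u| == 0)) /= big1 ?add0n in hs; last by move=> u /eqP.
rewrite (eq_bigr (fun _ => 2)) in hs; last by move=> u hu; case: (hch u) hu => ->.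
have e : \sum_(u | #|children t u| != 0) 2 = 2 * \sum_(u | #|children t u| != 0) 1.
  by rewrite big_distrr /=; apply: eq_bigr => u _; rewrite muln1.
rewrite e sum1dep_card in hs.
have hC := cardsC [set u | #|children t u| == 0].
have e2 : ~: [set u | #|children t u| == 0] = [set u | #|children t u| != 0].
  by apply/setP => u; rewrite !inE.
rewrite e2 in hC.
rewrite card_ord in hC; lia.
Qed.

Lemma pos_after n (d ls : seq nat) : 1 < n -> valid_diag n d -> ls \in choices (2*n-3) ->
  Wk d ls (2*n-3) != 0%R ->
  forall k, 0 < k < 2*n-2 -> forall j, nth 0 ls k.-1 <= j <= k.-1 -> 0 < rowf d ls k.-1 j.
Proof.
move=> hn hd hls hW k hk j hj.
have hmono := mono hn hd hls hW.
have hk' : 0 < k < (2*n-3).+1 by lia.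
have hne := wt_nz (Wk_nz hW hk').
have hk1 : k.-1 < 2*n-2 by lia.
set L := nth 0 ls k.-1 in hne hj.
have h1 : 0 < rowf d ls k.-1 L.
  move: hne; case: L hj => [|L'] hj hne; first by rewrite lt0n.
  have a : L' <= L'.+1 <= k.-1 by lia.
  have := hmono k.-1 hk1 L' L'.+1 a; move/eqP: hne => h1' h2'.
  apply: (leq_ltn_trans (leq0n (rowf d ls k.-1 L'))); rewrite ltn_neqAle h2' andbT.
  by apply/eqP => e; apply: h1'; rewrite e.
have a : L <= j <= k.-1 by lia.
have := hmono k.-1 hk1 L j a; lia.
Qed.

Lemma build_in_Fmats n (d ls : seq nat) : 1 < n -> valid_diag n d -> ls \in choices (2*n-3) ->
  Wk d ls (2*n-3) != 0%R -> build n d ls \in Fmats_with_diag n d.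
Proof.
move=> hn hd hls hW.
have [hs h0 h1 hpos hpm] := valid_facts hn hd.
have [hsz hch] := choices_prop hls.
have hmono := mono hn hd hls hW.
have hpa := pos_after hn hd hls hW.
have [v hv hrow] : exists2 v, v <= 2*n-3 & forall j, j <= 2*n-3 -> rowf d ls (2*n-3) j = (v <= j).
  have ex : exists j, 0 < rowf d ls (2*n-3) j by exists (2*n-3); rewrite rowf_diag h1.
  case: (ex_minnP ex) => v hv hmin.
  have hv3 : v <= 2*n-3 by apply: hmin; rewrite rowf_diag h1.
  exists v => // j hj.
  case: (leqP v j) => hvj.
    have a1 : v <= j <= 2*n-3 by lia.
    have a2 : j <= 2*n-3 <= 2*n-3 by lia.
    have h23 : 2*n-3 < 2*n-2 by lia.
    have := hmono _ h23 _ _ a1; have := hmono _ h23 _ _ a2; rewrite rowf_diag h1 /=; lia.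
  case: (posnP (rowf d ls (2*n-3) j)) => // hp.
  by have := hmin j hp; lia.
pose fpar x := if x == 0 then 0 else if x < 2*n-2 then nth 0 ls x.-1 else v.
have hfpar : forall x, 0 < x < 2*n-1 -> fpar x < x.
  move=> x hx; rewrite /fpar; case: eqP => [e|_]; first lia.
  case: (ltnP x (2*n-2)) => hx2; last lia.
  have := hch x.-1; lia.
have hfN : forall x, fpar x < 2*n-1.
  move=> x; rewrite /fpar; case: eqP => _; first lia.
  case: (ltnP x (2*n-2)) => hx2; last lia.
  have := hch x.-1; lia.
pose t : {ffun 'I_(2*n-1) -> 'I_(2*n-1)} := [ffun w => insubd w (fpar (val w))].
have ht : forall w, val (t w) = fpar (val w).
  by move=> w; rewrite ffunE val_insubd hfN.
have hC : forall i, i < 2*n-2 -> forall j, j <= i -> Cnt (2*n-1) fpar i j = rowf d ls i j.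
  suff : forall p i, i + p = 2*n-3 -> forall j, j <= i -> Cnt (2*n-1) fpar i j = rowf d ls i j.
    by move=> H i hi; apply: (H (2*n-3-i)); lia.
  elim=> [|p IH] i hip j hj.
    have ei : i = (2*n-2).-1 by lia.
    rewrite ei Cnt_step; last by lia.
    rewrite /Cnt big_geq; last by lia.
    rewrite /fpar.
    have -> : (2*n-2 == 0) = false by apply/negbTE; lia.
    rewrite ltnn addn0 (_ : (2*n-2).-1 = 2*n-3); last lia.
    rewrite hrow //; lia.
  have hi : 0 < i.+1 < 2*n-1 by lia.
  have := @Cnt_step (2*n-1) fpar i.+1 j hi => /= ->.
  rewrite IH; [|lia|lia].
  rewrite /fpar /=.
  have -> : i.+1 < 2*n-2 by lia.
  rewrite /= ifT; last by lia.
  have := hpa i.+1; rewrite /=.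
  have a : 0 < i.+1 < 2*n-2 by lia.
  move=> /(_ a j).
  case: (leqP (nth 0 ls i) j) => hl /=; last by rewrite subn0.
  move=> /(_ hj); lia.
have hFt : Fmatrix t = build n d ls.
  apply/matrixP => i j; rewrite !mxE.
  case: leqP => hji.
    rewrite (Cnt_card (f := fpar)) //; last by apply: (leq_trans (ltn_ord i)); lia.
    by apply: hC.
  by rewrite rowf_up.
have hlt : forall w, 0 < w < 2*n-1 -> fpar w < w by [].
have hch2 : forall u, #|children t u| = 0 \/ #|children t u| = 2.
  move=> [u hu]; rewrite (card_children (f := fpar)) //=.
  case: (posnP u) => hu0.
    rewrite hu0.
    have := hC 0 _ 0 (leqnn 0); rewrite /= /row0 /= h0 /Cnt => /(_ _).
    have a : 0 < 2*n-2 by lia.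
    move=> /(_ a) e; right; apply: etrans e; apply: eq_big_nat => w _.
    by case: (fpar w).
  case: (ltnP u (2*n-2)) => hu2; last first.
    left; rewrite big_geq //; lia.
  have e := hC u hu2 u (leqnn _).
  have e2 := hC u hu2 u.-1 (leq_pred _).
  rewrite /Cnt in e e2.
  have hs3 : \sum_(u.+1 <= w < 2*n-1) (fpar w <= u) =
     \sum_(u.+1 <= w < 2*n-1) (fpar w == u) + \sum_(u.+1 <= w < 2*n-1) (fpar w <= u.-1).
    rewrite -big_split /=; apply: eq_big_nat => w _.
    case: (ltngtP (fpar w) u) => h; case: (leqP (fpar w) u.-1) => h' /=; lia.
  rewrite hs3 e2 rowf_diag in e.
  case: u hu hu0 hu2 e e2 hs3 => [|u'] // hu _ hu2 e _ _.
  rewrite /= ltnSn rowf_diag in e.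
  have hl : nth 0 ls u' <= u' by apply: hch; lia.
  have hp0 : 0 < nth 0 d u' by apply: hpos; lia.
  rewrite hl /= in e.
  have := hpm u'.+1.
  have a : 0 < u'.+1 < 2*n-2 by lia.
  move=> /(_ a) /= hp; lia.
have hrts : is_rts n t.
  rewrite /is_rts; apply/andP; split; [apply/andP; split|].
  - apply/forallP => -[w hw]; rewrite ht /=.
    case: eqP => [->|hw0] //.
    apply: hfpar; lia.
  - by apply/forallP => u; case: (hch2 u) => ->.
  - by apply/eqP; apply: leaves_n.
rewrite /Fmats_with_diag mem_undup; apply/mapP; exists t => //.
by rewrite mem_enum inE hrts hFt mdiag_build // eqxx.
Qed.

Lemma Cnt_split N f i x : Cnt N f i x =
  \sum_(i.+1 <= w < N) (f w == x) + (if x is x'.+1 then Cnt N f i x' else 0).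
Proof.
case: x => [|x].
  by rewrite addn0 /Cnt; apply: eq_big_nat => w _; case: (f w).
rewrite /Cnt -big_split /=; apply: eq_big_nat => w _.
case: (ltngtP (f w) x.+1) => h; case: (leqP (f w) x) => h' /=; lia.
Qed.

Lemma card_children0 N (t : {ffun 'I_N -> 'I_N}) f (u : 'I_N) :
  (forall w, val (t w) = f (val w)) -> 0 < N ->
  #|children t u| = \sum_(1 <= w < N) (f w == val u).
Proof.
move=> hf hN.
have -> : children t u = [set w : 'I_N | (0 < val w) && (f (val w) == val u)].
  by apply/setP => w; rewrite !inE -(inj_eq val_inj) /= hf.
rewrite (card_nat _ (fun x => (0 < x) && (f x == val u))) (sum_split (i:=0)) //; last first.
  by case.
by apply: eq_big_nat => w /andP[hw _]; rewrite hw.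
Qed.

Definition cconst n (d : seq nat) : rat :=
  ((2^(n-1))%:R / \prod_(1 <= k < 2*n-2) ((nth 0 d k.-1)%:R : rat))%R.

Lemma Fmats_cond n d M : 1 < n -> valid_diag n d -> M \in Fmats_with_diag n d ->
  dtd_cond n d M = cconst n d.
Proof.
move=> hn hd.
have [hs h0 h1 hpos hpm] := valid_facts hn hd.
rewrite /Fmats_with_diag mem_undup => /mapP [t]; rewrite mem_enum inE => /andP[hrts hdg] ->.
pose g x := if (insub x : option 'I_(2*n-1)) is Some w then val (t w) else 0.
have hg : forall w, val (t w) = g (val w) by move=> w; rewrite /g valK.
have hN : 0 < 2*n-1 by lia.
move: hrts; rewrite /is_rts => /andP[/andP[/forallP ha /forallP hb] /eqP hc].
have hgl : forall x, 0 < x < 2*n-1 -> g x < x.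
  move=> x hx; have hx' : x < 2*n-1 by lia.
  have := ha (Ordinal hx'); rewrite hg /=.
  by case: eqP => [e|_]; [lia|].
have hent : forall i j, j <= i < 2*n-2 -> ent (Fmatrix t) i j = Cnt (2*n-1) g i j.
  move=> i j /andP[hji hi]; have hj : j < 2*n-2 by lia.
  rewrite (entE _ hi hj) mxE /= hji.
  by apply: Cnt_card => //; lia.
have hdiag : forall k, k < 2*n-2 -> Cnt (2*n-1) g k k = nth 0 d k.
  move=> k hk; rewrite -(eqP hdg) mdiag_nth // hent //; lia.
pose cnt K u := \sum_(K.+1 <= w < 2*n-1) (g w == u).
have hstep : forall k, 0 < k < 2*n-2 ->
    dtd_step (Fmatrix t) k = ((cnt k.-1 (g k))%:R / (nth 0 d k.-1)%:R)%R.
  move=> k hk; rewrite dtd_stepE.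
  have hgk : g k < k by apply: hgl; lia.
  have hCs : forall j, Cnt (2*n-1) g k.-1 j = (g k <= j) + Cnt (2*n-1) g k j.
    move=> j; apply: Cnt_step; lia.
  rewrite (bigD1 (Ordinal hgk)) //= big1 ?addr0.
    have -> : matchb (ent (Fmatrix t) k.-1) (ent (Fmatrix t) k) k (g k) = true.
      apply/forallP => -[j hj] /=.
      rewrite !hent; [|lia|lia].
      by rewrite hCs addKn.
    rewrite mulr1 /wt (hent k.-1 k.-1); last by lia.
    rewrite hdiag; last by lia.
    congr (_ / _)%R.
    rewrite (hent k.-1 (g k)); last by lia.
    rewrite Cnt_split.
    case e: (g k) => [|x] /=.
      by rewrite addn0 subr0.
    rewrite hent; last by lia.
    by rewrite PoszD addrK.
  move=> [L hL] /= hne.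
  case hm: matchb; last by rewrite mulr0.
  rewrite mulr1.
  move/forallP: hm => hm.
  case: (ltngtP L (g k)) => hLg.
  - have := hm (Ordinal hL); rewrite /= leqnn !hent; [|lia|lia].
    rewrite hCs leqNgt hLg add0n => /eqP e.
    have e0 : Cnt (2*n-1) g k L = 0 by lia.
    have e1 : Cnt (2*n-1) g k.-1 L = 0 by rewrite hCs leqNgt hLg e0.
    rewrite /wt hent; last by lia.
    rewrite e1; clear hm e; case: L hL hLg hne e0 e1 => [|L'] hL hLg hne e0 e1 /=.
      by rewrite subrr mul0r.
    rewrite hent; last by lia.
    have : Cnt (2*n-1) g k.-1 L' <= Cnt (2*n-1) g k.-1 L'.+1 by apply: Cnt_mono.
    rewrite e1 leqn0 => /eqP ->.
    by rewrite subrr mul0r.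
  - have := hm (Ordinal (ltn_trans hLg hL)); rewrite /= !hent; [|lia|lia].
    rewrite hCs leqnn leqNgt hLg /= subn0 => /eqP; lia.
  - by exfalso; move/eqP: hne; apply; apply: val_inj.
rewrite /dtd_cond hdg.
have -> : [forall i : 'I_(2*n-2), forall j : 'I_(2*n-2), (val i < val j) ==> (Fmatrix t i j == 0)] = true.
  apply/forallP => i; apply/forallP => j; apply/implyP => h.
  by rewrite mxE leqNgt h.
rewrite !mul1r.
rewrite (eq_big_nat _ _ (F2 := fun k => ((cnt k.-1 (g k))%:R / (nth 0 d k.-1)%:R)%R)); last first.
  by move=> k hk; apply: hstep.
rewrite prodf_div -natr_prod /cconst; congr (_%:R / _)%R.
have hcstep : forall K u, K.+1 < 2*n-1 -> cnt K u = (g K.+1 == u) + cnt K.+1 u.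
  by move=> K u hK; rewrite /cnt big_ltn.
have hgN : forall x, g x < 2*n-1.
  by move=> x; rewrite /g; case: insubP => // w _ _; apply: ltn_ord.
have inv : forall K, K.+1 < 2*n-1 ->
    (\prod_(1 <= k < K.+1) cnt k.-1 (g k)) * \prod_(0 <= u < 2*n-1) (cnt K u)`! =
    \prod_(0 <= u < 2*n-1) (cnt 0 u)`!.
  elim=> [|K IH] hK; first by rewrite big_geq ?mul1n.
  rewrite big_nat_recr //= -mulnA -IH; last by lia.
  congr (_ * _).
  set x := g K.+1.
  have hx : x < 2*n-1 := hgN _.
  rewrite (eq_big_nat _ _ (F1 := fun u => (cnt K u)`!)
     (F2 := fun u => (if u == x then cnt K x else 1) * (cnt K.+1 u)`!)); last first.
    move=> u _; rewrite (hcstep K u (ltnW hK)); case: (eqVneq u x) => [->|hu] /=.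
      by rewrite add1n factS (hcstep K x (ltnW hK)) eqxx.
    by rewrite mul1n add0n.
  rewrite big_split /=; congr (_ * _).
  rewrite big_mkord (bigD1 (Ordinal hx)) //= eqxx big1 ?muln1 //.
  by move=> u hu; case: eqP => // e; exfalso; move/eqP: hu; apply; apply: val_inj.
have hm3 : (2*n-3).+1 < 2*n-1 by lia.
have H := inv (2*n-3) hm3.
rewrite (_ : (2*n-3).+1 = 2*n-2) in H; last lia.
rewrite [X in _ * X]big1 ?muln1 in H; last first.
  move=> u _; rewrite /cnt (_ : (2*n-3).+1 = 2*n-2); last lia.
  rewrite (_ : 2*n-1 = (2*n-2).+1); last lia.
  by rewrite big_nat1; case: (_ == _).
rewrite H.
rewrite (_ : \prod_(0 <= u < 2*n-1) (cnt 0 u)`! = \prod_(u : 'I_(2*n-1)) (#|children t u|)`!); last first.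
  rewrite big_mkord; apply: eq_bigr => u _.
  by rewrite (card_children0 (f := g)).
rewrite (eq_bigr (fun u => 2 ^ (#|children t u| != 0))); last first.
  move=> u _; have := hb u; case/orP => /eqP -> //.
rewrite -expn_sum; congr (_ ^ _).
rewrite (eq_bigr (fun u => if #|children t u| != 0 then 1 else 0)); last by move=> u _; case: (_ != _).
rewrite -big_mkcond /= sum1dep_card.
have hC := cardsC [set u | #|children t u| == 0].
have e2 : ~: [set u | #|children t u| == 0] = [set u | #|children t u| != 0].
  by apply/setP => u; rewrite !inE.
rewrite e2 card_ord hc in hC.
rewrite -[LHS]/(#|[set u | #|children t u| != 0]|); lia.
Qed.

Lemma sum_const_seq (T : Type) (s : seq T) (c : rat) :
  (\sum_(X <- s) c = (size s)%:R * c)%R.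
Proof.
elim: s => [|x s IH]; first by rewrite big_nil mul0r.
by rewrite big_cons IH /= -nat1r mulrDl mul1r.
Qed.

Local Open Scope ring_scope.

Theorem proposition4 (n : nat) (hn : (2 <= n)%N) (d : seq nat)
  (hd : valid_diag n d) (M : 'M[nat]_(2 * n - 2)) :
  dtd_cond n d M =
  (if M \in Fmats_with_diag n d
   then ((size (Fmats_with_diag n d))%:R)^-1 else 0).
Proof.
have hn' : (1 < n)%N := hn.
have [hs _ _ _ _] := valid_facts hn' hd.
have huniq : uniq (Fmats_with_diag n d) := undup_uniq _.
have hsum : \sum_(X <- Fmats_with_diag n d) dtd_cond n d X = 1.
  rewrite (eq_bigr (fun X => \sum_(ls <- choices (2*n-3))
             ((X == build n d ls) : bool)%:R * Wk d ls (2*n-3))); last first.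
    by move=> X _; apply: dtd_cond_expand.
  rewrite exchange_big /=; apply: etrans (sumW_valid hn' hd).
  apply: eq_big_seq => ls hls.
  rewrite -mulr_suml.
  case: (eqVneq (Wk d ls (2*n-3)) 0) => [->|hW]; first by rewrite !mulr0.
  have hin := build_in_Fmats hn' hd hls hW.
  rewrite (big_rem _ hin) /= eqxx big1_seq ?addr0 ?mul1r //.
  move=> X /andP[_ hX].
  have : X \in [predD1 Fmats_with_diag n d & build n d ls] by rewrite -mem_rem_uniq.
  by rewrite inE => /andP[/negbTE -> _].
have hsize : (size (Fmats_with_diag n d))%:R * cconst n d = 1.
  rewrite -sum_const_seq; apply: etrans hsum.
  by apply: eq_big_seq => X hX; rewrite Fmats_cond.
have hnz : (size (Fmats_with_diag n d))%:R != 0 :> rat.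
  by apply/eqP => e; move: hsize; rewrite e mul0r => /eqP; rewrite eq_sym oner_eq0.
case hM: (M \in Fmats_with_diag n d).
  rewrite Fmats_cond //; apply: (mulfI hnz).
  by rewrite hsize mulfV.
rewrite dtd_cond_expand //; apply: big1_seq => ls /andP[_ hls].
case: (eqVneq M (build n d ls)) => [e|_]; last by rewrite mul0r.
case: (eqVneq (Wk d ls (2*n-3)) 0) => [->|hW]; first by rewrite mulr0.
by move: hM; rewrite e build_in_Fmats.
Qed.
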